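(* Let $\mathbb{F}$ be any field and $d\ge 1$. Suppose $T,A\in GL(d,\mathbb{F})$ commute, and that $T$ is conjugate in $GL(d,\mathbb{F})$ to $TA$ and also to $TA^2$. Then every eigenvalue of $A$ (in an algebraic closure of $\mathbb{F}$) is a root of unity. *)

(* Defs.v *)
From mathcomp Require Import all_boot all_algebra.
Set Implicit Arguments. Unset Strict Implicit. Unset Printing Implicit Defensive.
Import GRing.Theory.
Local Open Scope ring_scope.

Definition mx_conj (F : fieldType) (d : nat) (A B : 'M[F]_d) : Prop :=
  exists2 P : 'M[F]_d, P \in unitmx & B = invmx P *m A *m P.

Definition is_root_of_unity (L : fieldType) (a : L) : Prop :=
  exists2 n : nat, (0 < n)%N & a ^+ n = 1.

(* Main.v *)
Require Import Defs.
From mathcomp Require Import all_boot all_algebra.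
From mathcomp Require Import ring fingroup perm.
Set Implicit Arguments. Unset Strict Implicit. Unset Printing Implicit Defensive.
Import GRing.Theory Num.Theory.
Local Open Scope ring_scope.
Lemma eigenvalue_closed' {C : closedFieldType} n (A : 'M[C]_n) : (n > 0)%N ->
  exists a, eigenvalue A a.
Proof.
move=> n_gt0; have /closed_rootP [a rAa] : size (char_poly A) != 1%N.
  by rewrite size_char_poly; case: (n) n_gt0.
by exists a; rewrite eigenvalue_root_char.
Qed.

Lemma common_eigenvector' {C : closedFieldType} n (As : seq 'M[C]_n) :
  (n > 0)%N -> {in As &, forall A B, comm_mx A B} ->
  exists2 v : 'rV_n, v != 0 & all (fun A => stablemx v A) As.
Proof.
move=> n_gt0 /all_comm_mxP; have [k sAsk] := ubnP (size As).
elim: k n n_gt0 As sAsk => [//|k IHk]  n n_gt0 [|A As].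
  exists (const_mx 1) => //; apply/negP => /eqP/rowP/(_ (Ordinal n_gt0)).
  by rewrite !mxE => /eqP; rewrite oner_eq0.
rewrite ltnS all_comm_mx_cons => sAsk /andP[].
move=> /allP/(_ _ _)/eqP/= A_comm /all_comm_mxP As_comm.
have [a a_eigen] := eigenvalue_closed' A n_gt0.
have [] := IHk _ _ [seq restrictmx (eigenspace A a) B | B <- As].
- by rewrite lt0n mxrank_eq0.
- by rewrite size_map.
- apply/all_comm_mxP; move=> _ _ /= /mapP /= [B B_in ->] /mapP /= [B' B'_in ->].
  rewrite -?conjmxM ?inE ?stablemx_row_base ?comm_mx_stable_eigenspace//;
  by [rewrite As_comm | apply: As_comm | apply: A_comm].
move=> v vN0 /allP /= vP; exists (v *m (row_base (eigenspace A a))).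
  by rewrite mulmx_free_eq0 ?row_base_free.
apply/andP; split.
  by apply/eigenvectorP; exists a; rewrite mulmx_sub // eq_row_base.
apply/allP => B B_in; rewrite -stablemx_restrict ?vP //.
  by apply/mapP; exists B.
by rewrite comm_mx_stable_eigenspace //; exact: A_comm.
Qed.

Lemma common_eig2 {C : closedFieldType} n (A B : 'M[C]_n) :
  (n > 0)%N -> A *m B = B *m A ->
  exists v : 'rV_n, [/\ v != 0, exists a, v *m A = a *: v & exists b, v *m B = b *: v].
Proof.
move=> n_gt0 AB_comm; have [] := @common_eigenvector' _ _ [:: A; B] n_gt0.
  move=> A' B'; rewrite !inE => /orP [] /eqP-> /orP [] /eqP-> //;
  rewrite /comm_mx; first [exact AB_comm | exact (esym AB_comm)].
move=> v v_neq0 /allP vP; exists v; split => //.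
  have /eigenvectorP [a /eigenspaceP] := vP A (mem_head _ _); by exists a.
have BAB : B \in [:: A; B] by rewrite !inE eqxx orbT.
have /eigenvectorP [a /eigenspaceP] := vP B BAB; by exists a.
Qed.
Lemma ext_basis {C : fieldType} k (v : 'rV[C]_(1 + k)) : v != 0 ->
  exists2 S : 'M[C]_(1 + k), S \in unitmx & usubmx S = v.
Proof.
move=> v0.
have e : \rank (v^C)%MS = k.
  by rewrite mxrank_compl rank_rV v0 add1n subn1.
pose W : 'M[C]_(k, 1 + k) := castmx (e, erefl) (row_base (v^C)%MS).
exists (col_mx v W); last by rewrite col_mxKu.
rewrite -row_full_unit.
have X : (col_mx v W == v + v^C)%MS.
  apply/eqmxP; apply: eqmx_trans; first exact: (eqmx_sym (addsmxE v W)).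
  apply: adds_eqmx => //.
  apply: eqmx_trans; first exact: eqmx_cast.
  exact: eq_row_base.
rewrite /row_full (eqmx_rank X).
exact: addsmx_compl_full.
Qed.

Lemma usubmxM {C : fieldType} m1 m2 n p (X : 'M[C]_(m1 + m2, n)) (Y : 'M_(n, p)) :
  usubmx (X *m Y) = usubmx X *m Y.
Proof. by rewrite -{1}[X]vsubmxK mul_col_mx col_mxKu. Qed.

Lemma conj_first {C : fieldType} k (S A : 'M[C]_(1 + k)) a :
  S \in unitmx -> usubmx S *m A = a *: usubmx S ->
  ursubmx (S *m A *m invmx S) = 0 /\ ulsubmx (S *m A *m invmx S) = a%:M.
Proof.
move=> Su SA.
have H : usubmx (S *m A *m invmx S) = a *: row_mx 1%:M 0.
  rewrite !usubmxM SA -scalemxAl -usubmxM mulmxV //.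
  by rewrite [1%:M]scalar_mx_block -[block_mx _ _ _ _]/(col_mx _ _) col_mxKu.
rewrite /ursubmx /ulsubmx H scale_row_mx row_mxKr row_mxKl scaler0.
by rewrite scalemx1.
Qed.

Lemma invmxM' {C : fieldType} n (X Y : 'M[C]_n) : X \in unitmx -> Y \in unitmx ->
  invmx (X *m Y) = invmx Y *m invmx X.
Proof.
move=> Xu Yu.
have XYu : X *m Y \in unitmx by rewrite unitmx_mul Xu Yu.
have H : X *m Y *m (invmx Y *m invmx X) = 1%:M.
  by rewrite mulmxA mulmxK // mulmxV.
by rewrite -[RHS](mulKmx XYu) H mulmx1.
Qed.

Lemma conj_block {C : fieldType} k (Q : 'M[C]_k) (x : 'M_1) c D : Q \in unitmx ->
  (block_mx 1%:M 0 0 Q : 'M_(1 + k)) \in unitmx /\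
  invmx (block_mx 1%:M 0 0 Q : 'M_(1 + k)) = block_mx 1%:M 0 0 (invmx Q) /\
  (block_mx 1%:M 0 0 Q : 'M_(1 + k)) *m block_mx x 0 c D *m block_mx 1%:M 0 0 (invmx Q)
   = block_mx x 0 (Q *m c) (Q *m D *m invmx Q).
Proof.
move=> Qu.
have Qbu : (block_mx 1%:M 0 0 Q : 'M_(1 + k)) \in unitmx.
  by rewrite unitmxE det_ublock det1 mul1r -unitmxE.
split => //; split; first by rewrite invmx_block_diag // invmx1.
rewrite !mulmx_block !(mulmx0, mul0mx, mul1mx, mulmx1, addr0, add0r).
done.
Qed.

Lemma cotrig2 {C : closedFieldType} n (A B : 'M[C]_n) : A *m B = B *m A ->
  exists2 P : 'M_n, P \in unitmx &
    is_trig_mx (P *m A *m invmx P) && is_trig_mx (P *m B *m invmx P).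
Proof.
elim: n A B => [|k IH] A B AB.
  exists 1%:M; first exact: unitmx1.
  by apply/andP; split; apply/is_trig_mxP => -[].
have [v [v0 [a va] [b vb]]] := common_eig2 (ltn0Sn k) AB.
have [S Su Sv] := @ext_basis _ k v v0.
have SvA : usubmx S *m A = a *: usubmx S by rewrite Sv.
have SvB : usubmx S *m B = b *: usubmx S by rewrite Sv.
have [urA ulA] := @conj_first _ k S A a Su SvA.
have [urB ulB] := @conj_first _ k S B b Su SvB.
set A0 := S *m A *m invmx S in urA ulA.
set B0 := S *m B *m invmx S in urB ulB.
have [cA [DA A0E]] : exists cA DA, A0 = block_mx a%:M 0 cA DA.
  by exists (dlsubmx A0), (drsubmx A0); rewrite -urA -ulA submxK.
have [cB [DB B0E]] : exists cB DB, B0 = block_mx b%:M 0 cB DB.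
  by exists (dlsubmx B0), (drsubmx B0); rewrite -urB -ulB submxK.
have comm : DA *m DB = DB *m DA.
  have : A0 *m B0 = B0 *m A0.
    rewrite /A0 /B0 !mulmxA mulmxKV // mulmxKV //.
    by rewrite -!mulmxA (mulmxA A) AB !mulmxA.
  rewrite A0E B0E !mulmx_block => /eq_block_mx [_ _ _].
  by rewrite !mulmx0 !add0r.
have [Q Qu /andP[QA QB]] := IH _ _ comm.
have [Qbu [Qbi Qconj]] := conj_block (a%:M) cA DA Qu.
have [_ [_ QconjB]] := conj_block (b%:M) cB DB Qu.
exists (block_mx 1%:M 0 0 Q *m S); first by rewrite unitmx_mul Qbu Su.
rewrite invmxM' // Qbi.
have -> : block_mx 1%:M 0 0 Q *m S *m A *m (invmx S *m block_mx 1%:M 0 0 (invmx Q))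
   = block_mx 1%:M 0 0 Q *m A0 *m block_mx 1%:M 0 0 (invmx Q).
  by rewrite /A0 !mulmxA.
have -> : block_mx 1%:M 0 0 Q *m S *m B *m (invmx S *m block_mx 1%:M 0 0 (invmx Q))
   = block_mx 1%:M 0 0 Q *m B0 *m block_mx 1%:M 0 0 (invmx Q).
  by rewrite /B0 !mulmxA.
rewrite A0E B0E Qconj QconjB.
by apply/andP; split;
  rewrite -[is_trig_mx _]/(@is_trig_mx _ (1 + k) (1 + k) _) is_trig_block_mx //
    eqxx ?QA ?QB mx11_is_trig.
Qed.
Lemma key_sq (R : realFieldType) d (s t : 'S_d) (x : 'I_d -> R) :
  (forall i, 2 * x (s i) = x i + x (t i)) -> forall i, x (s i) = x i.
Proof.
move=> hyp.
pose S := \sum_i x i ^+ 2.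
have Ss : \sum_i x (s i) ^+ 2 = S by rewrite /S [RHS](reindex_inj (@perm_inj _ s)).
have St : \sum_i x (t i) ^+ 2 = S by rewrite /S [RHS](reindex_inj (@perm_inj _ t)).
have e : forall i, (x i - x (t i)) ^+ 2 =
    2 * x i ^+ 2 + 2 * x (t i) ^+ 2 - 4 * x (s i) ^+ 2.
  move=> i; have -> : 4 * x (s i) ^+ 2 = (2 * x (s i)) ^+ 2 by ring.
  by rewrite hyp; ring.
have D0 : \sum_i (x i - x (t i)) ^+ 2 = 0.
  rewrite (eq_bigr _ (fun i _ => e i)) sumrB big_split /=.
  by rewrite -!mulr_sumr Ss St -/S; ring.
have := psumr_eq0P (fun i _ => sqr_ge0 (x i - x (t i))) D0.
move=> H i; have /eqP := H i isT; rewrite sqrf_eq0 subr_eq0 => /eqP hti.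
have := hyp i; rewrite -hti => h2.
have : 2 * (x (s i) - x i) = 0 by rewrite mulrBr h2; ring.
by move/eqP; rewrite mulf_eq0 pnatr_eq0 /= subr_eq0 => /eqP.
Qed.

Lemma sum_delta (R : pzRingType) d (a : 'I_d) (y : 'I_d -> R) :
  \sum_l (a == l)%:R * y l = y a.
Proof.
rewrite (bigD1 a) //= eqxx mul1r big1 ?addr0 // => l.
by rewrite eq_sym => /negbTE ->; rewrite mul0r.
Qed.

Lemma sum_delta3 (R : pzRingType) d (a b c : 'I_d) (y : 'I_d -> R) :
  \sum_l (2 * (a == l)%:R - (b == l)%:R - (c == l)%:R) * y l = 2 * y a - y b - y c.
Proof.
under eq_bigr do rewrite !mulrBl -mulrA.
by rewrite !sumrB -mulr_sumr !sum_delta.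
Qed.

Definition Mrel d (s t : 'S_d) : 'M[rat]_d :=
  \matrix_(k, j) (2 * (s k == j)%:R - (k == j)%:R - (t k == j)%:R).

Lemma span_rat d (s t : 'S_d) (i : 'I_d) :
  exists D : 'rV[rat]_d, forall j,
    ((s i == j)%:R - (i == j)%:R : rat) = \sum_k D 0 k * Mrel s t k j.
Proof.
pose w : 'rV[rat]_d := \row_j ((s i == j)%:R - (i == j)%:R).
have : (w <= Mrel s t)%MS.
  rewrite submxE; apply/eqP/matrixP => a j; rewrite ord1 !mxE.
  pose K := cokermx (Mrel s t).
  have MK := mulmx_coker (Mrel s t).
  pose x l := K l j.
  have hx : forall k, 2 * x (s k) = x k + x (t k).
    move=> k; have /matrixP /(_ k j) := MK; rewrite !mxE.
    under eq_bigr do rewrite mxE.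
    rewrite sum_delta3 => /eqP; rewrite -addrA -opprD subr_eq0 => /eqP.
    by [].
  have := key_sq hx i.
  under eq_bigr do rewrite mxE.
  by rewrite -/K (eq_bigr (fun l => ((s i == l)%:R - (i == l)%:R) * x l)) //
    (eq_bigr _ (fun l _ => mulrBl _ _ _)) sumrB !sum_delta => ->; rewrite subrr.
case/submxP => D wD; exists D => j.
by have /matrixP /(_ 0 j) := wD; rewrite !mxE => ->.
Qed.

Lemma span_int d (s t : 'S_d) (i : 'I_d) :
  exists2 N : nat, (0 < N)%N & exists z : 'I_d -> int, forall j,
    N%:Z * ((s i == j)%:R - (i == j)%:R) =
    \sum_k z k * (2 * (s k == j)%:R - (k == j)%:R - (t k == j)%:R).
Proof.
have [D hD] := span_rat s t i.
pose c k := D 0 k.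
pose den k := denq (c k).
pose Nz := \prod_k den k.
have Nz_gt0 : 0 < Nz by apply: prodr_gt0 => k _; exact: denq_gt0.
pose z k := numq (c k) * \prod_(l | l != k) den l.
have cz : forall k, (Nz%:~R : rat) * c k = (z k)%:~R.
  move=> k; rewrite /Nz (bigD1 k) //= /z !rmorphM /= numqE /den.
  by rewrite mulrC mulrA.
have [N NE] : exists N : nat, Nz = N%:Z.
  by exists `|Nz|%N; rewrite gtz0_abs.
exists N; first by rewrite -ltz_nat -NE.
exists z => j; apply/eqP; rewrite -(eqr_int rat) -NE.
rewrite rmorphM /= rmorphB /= !rmorph_nat hD mulr_sumr rmorph_sum /=.
apply/eqP; apply: eq_bigr => k _.
rewrite mulrA cz /Mrel mxE intrM; congr (_ * _).
by rewrite !intrB intrM !mulrz_nat.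
Qed.
Section Mult.
Variables (L : fieldType) (d : nat) (tt : 'I_d -> L).
Hypothesis htt : forall j, tt j != 0.

Definition Ez (g : 'I_d -> int) := \prod_j tt j ^ g j.

Let ut j : tt j \is a GRing.unit. Proof. by rewrite unitfE. Qed.

Lemma Ez_ext g h : (forall j, g j = h j) -> Ez g = Ez h.
Proof. by move=> e; apply: eq_bigr => j _; rewrite e. Qed.

Lemma Ez_unit g : Ez g \is a GRing.unit.
Proof.
by rewrite unitfE; apply/prodf_neq0 => j _; apply: expfz_neq0.
Qed.

Lemma Ez_add g h : Ez (fun j => g j + h j) = Ez g * Ez h.
Proof. by rewrite /Ez -big_split; apply: eq_bigr => j _; rewrite exprzDr. Qed.

Lemma Ez_sum g : Ez (fun j => \sum_(k < d) g k j) = \prod_(k < d) Ez (g k).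
Proof.
rewrite /Ez (exchange_big _ _ _ _ _ (fun k j => tt j ^ g k j)).
apply: eq_bigr => j _.
apply: (big_morph (fun z => tt j ^ z) (id1 := 1) (op1 := *%R)).
  by move=> x y; rewrite exprzDr.
by [].
Qed.

Lemma prodXz (y : 'I_d -> L) z : (forall j, y j \is a GRing.unit) ->
  (\prod_j y j) ^ z = \prod_j y j ^ z.
Proof.
move=> uy.
pose K := fun (a b : L) => a \is a GRing.unit /\ a ^ z = b.
suff : K (\prod_j y j) (\prod_j y j ^ z) by case.
apply: (big_rec2 K); first by split; [exact: unitr1 | exact: exp1rz].
move=> j a b _ [ua <-]; split; first by rewrite unitrM uy ua.
by rewrite exprzMl.
Qed.

Lemma Ez_mulz z g : Ez (fun j => z * g j) = Ez g ^ z.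
Proof.
rewrite /Ez prodXz; last by move=> j; apply: unitrXz.
by apply: eq_bigr => j _; rewrite exprz_exp mulrC.
Qed.

Lemma Ez_delta a : Ez (fun j => (a == j)%:R) = tt a.
Proof.
rewrite /Ez (bigD1 a) //= eqxx big1 ?mulr1 // => j.
by rewrite eq_sym => /negbTE ->.
Qed.

Lemma Ez_opp g : Ez (fun j => - g j) = (Ez g)^-1.
Proof.
rewrite -exprN1 -Ez_mulz; apply: Ez_ext => j; by rewrite mulN1r.
Qed.

End Mult.

Lemma mult_part (L : fieldType) d (s t : 'S_d) (tt : 'I_d -> L) :
  (forall j, tt j != 0) -> (forall k, tt (s k) ^+ 2 = tt k * tt (t k)) ->
  forall i, exists2 N, (0 < N)%N & (tt (s i) / tt i) ^+ N = 1.
Proof.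
move=> htt hrel i.
have [N N0 [z hz]] := span_int s t i.
exists N => //.
have EM : forall k, Ez tt (fun j => 2 * (s k == j)%:R - (k == j)%:R - (t k == j)%:R) = 1.
  move=> k.
  transitivity (Ez tt (fun j => 2 * (s k == j)%:R) * Ez tt (fun j => - (k == j)%:R)
                * Ez tt (fun j => - (t k == j)%:R)).
    by rewrite -!Ez_add //; apply: Ez_ext.
  rewrite Ez_mulz // !Ez_opp // !Ez_delta.
  have -> : tt (s k) ^ (2 : int) = tt (s k) ^+ 2 by [].
  by rewrite hrel -mulrA -invfM mulfV // mulf_neq0.
have E1 : Ez tt (fun j => N%:Z * ((s i == j)%:R - (i == j)%:R)) = 1.
  rewrite (Ez_ext _ hz).
  rewrite (Ez_sum htt (fun k j => z k * (2 * (s k == j)%:R - (k == j)%:R - (t k == j)%:R))).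
  by apply: big1 => k _; rewrite Ez_mulz // EM exp1rz.
move: E1; rewrite Ez_mulz // -exprnP.
have -> : Ez tt (fun j => (s i == j)%:R - (i == j)%:R) = tt (s i) / tt i.
  by rewrite (Ez_add htt (fun j => (s i == j)%:R) (fun j => - (i == j)%:R)) Ez_opp // !Ez_delta.
by [].
Qed.

Lemma perm_from_prod (L : fieldType) d (x y : 'I_d -> L) :
  \prod_(i < d) ('X - (x i)%:P) = \prod_(i < d) ('X - (y i)%:P) ->
  exists p : 'S_d, forall i, x i = y (p i).
Proof.
have e : forall z : 'I_d -> L, \prod_(i < d) ('X - (z i)%:P) =
    \prod_(w <- [tuple z i | i < d]) ('X - w%:P).
  by move=> z; rewrite /= big_map big_enum.
rewrite !e => /prod_XsubC_eq /tuple_permP [p hp].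
exists p => i.
have := congr1 (fun s : seq L => nth 0 s i) hp.
by rewrite /= !nth_mktuple tnth_mktuple.
Qed.

Lemma trig_mul (R : comNzRingType) n (X Y : 'M[R]_n) :
  is_trig_mx X -> is_trig_mx Y ->
  is_trig_mx (X *m Y) /\ forall i, (X *m Y) i i = X i i * Y i i.
Proof.
move=> /is_trig_mxP hX /is_trig_mxP hY; split.
  apply/is_trig_mxP => i j lij; rewrite mxE big1 // => k _.
  case: (ltnP i k) => hik; first by rewrite hX // mul0r.
  by rewrite hY ?mulr0 // (leq_ltn_trans hik lij).
move=> i; rewrite mxE (bigD1 i) //= big1 ?addr0 // => k nki.
case: (ltngtP i k) => hik; first by rewrite hX // mul0r.
  by rewrite hY ?mulr0.
by move: nki; rewrite (val_inj hik) eqxx.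
Qed.

Lemma char_poly_conj (F : fieldType) n (P M : 'M[F]_n) : P \in unitmx ->
  char_poly (P *m M *m invmx P) = char_poly M.
Proof.
move=> Pu.
rewrite /char_poly.
have H1 : map_mx polyC P *m 'X%:M *m map_mx polyC (invmx P) = 'X%:M.
  by rewrite scalar_mxC -mulmxA -map_mxM mulmxV // map_mx1 mulmx1.
have -> : char_poly_mx (P *m M *m invmx P) =
   map_mx polyC P *m char_poly_mx M *m map_mx polyC (invmx P).
  rewrite /char_poly_mx mulmxBr mulmxBl H1.
  by rewrite -!map_mxM.
rewrite !det_mulmx mulrC mulrA -det_mulmx -map_mxM mulVmx //.
by rewrite map_mx1 det1 mul1r.
Qed.

Unset Implicit Arguments.

Theorem theorem6p2 (F : fieldType) (d : nat) (hd : (0 < d)%N)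
  (T A : 'M[F]_d) (hT : T \in unitmx) (hA : A \in unitmx)
  (hcomm : T *m A = A *m T)
  (h1 : mx_conj T (T *m A)) (h2 : mx_conj T (T *m (A *m A))) :
  forall (L : closedFieldType) (f : {rmorphism F -> L}) (a : L),
    eigenvalue (map_mx f A) a -> is_root_of_unity a.
Proof.
move=> L f a eig.
have eqc : forall B, mx_conj T B -> char_poly B = char_poly T.
  move=> B [Q Qu ->].
  have Qiu : invmx Q \in unitmx by rewrite unitmx_inv.
  by have := @char_poly_conj _ _ (invmx Q) T Qiu; rewrite invmxK.
set T' := map_mx f T. set A' := map_mx f A.
have comm : T' *m A' = A' *m T' by rewrite -!map_mxM hcomm.
have [P Pu /andP [trT trA]] := cotrig2 comm.
have conjM : forall X Y, P *m (X *m Y) *m invmx P =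
    (P *m X *m invmx P) *m (P *m Y *m invmx P).
  by move=> X Y; rewrite !mulmxA mulmxKV.
set tT := P *m T' *m invmx P in trT conjM *.
set tA := P *m A' *m invmx P in trA conjM *.
have [trTA dTA] := trig_mul trT trA.
have [trTAA dTAA] := trig_mul trTA trA.
pose tt i := tT i i. pose u i := tA i i.
have cT : char_poly T' = \prod_(i < d) ('X - (tt i)%:P).
  by rewrite -(@char_poly_conj _ _ P _ Pu) char_poly_trig.
have cTA : char_poly T' = \prod_(i < d) ('X - (tt i * u i)%:P).
  rewrite -map_char_poly -(eqc _ h1) map_char_poly map_mxM -/T' -/A'.
  rewrite -(@char_poly_conj _ _ P _ Pu) conjM char_poly_trig //.
  by apply: eq_bigr => i _; rewrite dTA.
have cTAA : char_poly T' = \prod_(i < d) ('X - (tt i * u i * u i)%:P).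
  rewrite -map_char_poly -(eqc _ h2) map_char_poly !map_mxM -/T' -/A'.
  rewrite -(@char_poly_conj _ _ P _ Pu) !conjM char_poly_trig; last first.
    by rewrite mulmxA.
  by apply: eq_bigr => i _; rewrite mulmxA dTAA dTA.
have [s hs] : exists s : 'S_d, forall i, tt i * u i = tt (s i).
  by apply: perm_from_prod; rewrite -cTA -cT.
have [t ht] : exists t : 'S_d, forall i, tt i * u i * u i = tt (t i).
  by apply: perm_from_prod; rewrite -cTAA -cT.
have tt0 : forall j, tt j != 0.
  have tTu : tT \in unitmx by rewrite !unitmx_mul Pu unitmx_inv Pu map_unitmx hT.
  move: tTu; rewrite unitmxE unitfE det_trig // => /prodf_neq0 H j.
  exact: H.
have hrel : forall k, tt (s k) ^+ 2 = tt k * tt (t k).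
  by move=> k; rewrite -hs -ht; ring.
have cA : char_poly A' = \prod_(i < d) ('X - (u i)%:P).
  by rewrite -(@char_poly_conj _ _ P _ Pu) char_poly_trig.
move: eig; rewrite eigenvalue_root_char cA /root horner_prod.
move=> /prodf_eq0 [i _]; rewrite hornerXsubC subr_eq0 => /eqP ->.
have [N N0 hN] := mult_part tt0 hrel i.
exists N => //.
by move: hN; rewrite -hs mulrAC mulfV // mul1r.
Qed.
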